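(* Let $I,J,I',J'\subseteq\mathbb{R}$ be intervals and let $\tilde s:I'\times J'\to I$, $\tilde t:I'\times J'\to J$ be such that $\tilde T(x,y)=(\tilde s(x,y),\tilde t(x,y))$ is a bijection from $I'\times J'$ onto $I\times J$. Let $\tilde h:I'\times J'\to(0,\infty)$ be such that for every bounded continuous $g:\mathbb{R}\to\mathbb{R}$ the functions $(g\circ\tilde s)\cdot\tilde h$, $(g\circ\tilde t)\cdot\tilde h$ and $(g\circ\tilde s)\cdot(\tilde t-\tilde s)\cdot\tilde h$ are competitorblind. Then $\tilde s$ is constant in $y$ and $\tilde t$ is constant in $x$.
   Context: Two finite measures $\alpha,\beta$ on $\mathbb{R}^2$ are competitors if they have the same first marginal $\alpha_0$ and the same second marginal, and for disintegrations $(\alpha_x),(\beta_x)$ with respect to $\alpha_0$ one has $\int y\,\alpha_x(dy)=\int y\,\beta_x(dy)$ for $\alpha_0$-a.e. $x$. A function $f$ on a rectangle $A\times B$ is called competitorblind if $\int f\,d\alpha=\int f\,d\beta$ whenever $\alpha,\beta$ are competitors concentrated on $A\times B$. *)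

(* Defs.v *)
From HB Require Import structures.
From mathcomp Require Import all_boot all_order all_algebra.
From mathcomp Require Import all_classical all_reals all_analysis.
Set Implicit Arguments. Unset Strict Implicit. Unset Printing Implicit Defensive.
Import Order.TTheory GRing.Theory Num.Theory.
Import numFieldNormedType.Exports.
Local Open Scope classical_set_scope.
Local Open Scope ring_scope.

(* A (probability) kernel [k] is a disintegration of the measure [a] on R^2
   with respect to its first marginal a_0 = a \o fst^-1 :
   a (X x Y) = \int_{x in X} k x Y  d a_0(x), written via the image measure
   as an integral against [a] of a function of the first coordinate. *)
Definition disintegration (R : realType)
    (a : {finite_measure set (R * R)%type -> \bar R}) (k : R.-pker R ~> R) :=
  forall X Y : set R, measurable X -> measurable Y ->
    a (X `*` Y) = (\int[a]_(p in X `*` [set: R]) k p.1 Y)%E.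

Definition competitors (R : realType)
    (a b : {finite_measure set (R * R)%type -> \bar R}) :=
  (forall X : set R, measurable X -> a (X `*` [set: R]) = b (X `*` [set: R])) /\
  (forall Y : set R, measurable Y -> a ([set: R] `*` Y) = b ([set: R] `*` Y)) /\
  exists ka kb : R.-pker R ~> R,
    [/\ disintegration a ka, disintegration b kb &
        {ae a, forall p : R * R,
           (\int[ka p.1]_y (y%:E) = \int[kb p.1]_y (y%:E))%E}].

Definition concentrated_on (R : realType)
    (a : {finite_measure set (R * R)%type -> \bar R}) (S : set (R * R)) :=
  a (~` S) = 0%E.

Definition competitorblind (R : realType) (A B : set R) (f : R * R -> R) :=
  forall a b : {finite_measure set (R * R)%type -> \bar R},
    competitors a b -> concentrated_on a (A `*` B) -> concentrated_on b (A `*` B) ->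
    (\int[a]_(p in A `*` B) (f p)%:E = \int[b]_(p in A `*` B) (f p)%:E)%E.

Definition nd_interval (R : realType) (E : set R) :=
  is_interval E /\ exists x y, E x /\ E y /\ x < y.

(* Main.v *)
Require Import Defs.
From HB Require Import structures.
From mathcomp Require Import all_boot all_order all_algebra.
From mathcomp Require Import all_classical all_reals all_analysis.
From mathcomp Require Import measurable_realfun.
From mathcomp.algebra_tactics Require Import ring lra.
Import Order.TTheory GRing.Theory Num.Theory.
Import numFieldNormedType.Exports.
Local Open Scope classical_set_scope.
Local Open Scope ring_scope.

Module Helpers.
Set Implicit Arguments. Unset Strict Implicit. Unset Printing Implicit Defensive.
Import HBNNSimple.

Lemma nnint_le d (T : measurableType d) (R : realType) (mu : {measure set T -> \bar R})
  (P D : set T) (mP : measurable P) (mu0 : mu (~` P) = 0%E) (F G : T -> \bar R) :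
  (forall x, D x -> (0 <= F x)%E) -> (forall x, D x -> (0 <= G x)%E) ->
  (forall x, P x -> D x -> (F x <= G x)%E) ->
  (\int[mu]_(x in D) F x <= \int[mu]_(x in D) G x)%E.
Proof.
move=> F0 G0 FG; rewrite !ge0_integralE //.
apply: ge_ereal_sup => _ [h hF <-].
have eqs : sintegral mu h = sintegral mu (proj_nnsfun h mP).
  rewrite -!integralT_nnsfun; apply: ge0_ae_eq_integral => //.
  - by apply/measurable_EFinP; exact: measurable_funP.
  - by apply/measurable_EFinP; exact: measurable_funP.
  - by move=> x _; rewrite lee_fin.
  - by move=> x _; rewrite lee_fin.
  exists (~` P); split => //; first exact: measurableC.
  move=> x /= /not_implyP [_ hx] Px; apply: hx.
  by rewrite /proj_nnsfun /= mindicE mem_set // mulr1.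
rewrite eqs; apply: ereal_sup_ubound => /=; exists (proj_nnsfun h mP) => //.
move=> x /=; rewrite mindicE; have [xP|xP] := boolP (x \in P).
  rewrite mulr1; apply: (le_trans (hF x)); rewrite /patch; case: ifPn => // xD.
  by apply: FG; [exact: set_mem|exact: set_mem].
rewrite mulr0; rewrite /patch; case: ifPn => // xD; apply: G0; exact: set_mem.
Qed.
Lemma fin_meas d (T : measurableType d) (s1 : forall q : T, measurable [set q]) (l : seq T) :
  forall S, S `<=` [set x | x \in l] -> measurable S.
Proof.
elim: l => [|a l IH] S SL.
  suff -> : S = set0 by []. by apply/seteqP; split => // x /SL.
rewrite (_ : S = (S `&` [set a]) `|` (S `\` [set a])); last first.
  apply/seteqP; split=> [x Sx|x [[]|[]]] //.
  by have [xa|xa] := pselect (x = a); [left|right].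
apply: measurableU.
  have [Sa|Sa] := pselect (S a).
    suff -> : S `&` [set a] = [set a] by [].
    by apply/seteqP; split => [x []//|x /= ->].
  suff -> : S `&` [set a] = set0 by [].
  by apply/seteqP; split => // x [Sx /= xa]; move: Sa; rewrite -xa.
apply: IH => x [/SL]; rewrite /= inE => /orP[/eqP -> //|//].
Qed.

Lemma set1_RR (R : realType) (q : (R * R)%type) : measurable [set q].
Proof.
case: q => a b; rewrite (_ : [set (a, b)] = [set a] `*` [set b]).
  by apply: measurableX; exact: measurable_set1.
by apply/seteqP; split => [[x y] /= [-> ->]|[x y] /= [-> ->]].
Qed.

Definition dsum d (T : measurableType d) (R : realType) (x0 : T) (l : seq T) : set T -> \bar R :=
  msum (fun k => @dirac _ _ (nth x0 l k) R) (size l).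
HB.instance Definition _ d (T : measurableType d) (R : realType) x0 l := Measure.on (@dsum d T R x0 l).

Lemma dsumE d (T : measurableType d) (R : realType) x0 l (A : set T) :
  @dsum d T R x0 l A = (\sum_(p <- l) \1_A p)%:E.
Proof.
by rewrite /dsum /msum /= -sumEFin (big_nth x0) big_mkord; apply: eq_bigr.
Qed.

Lemma int_dsum_ge0 d (T : measurableType d) (R : realType) x0 l (D : set T) (mD : measurable D)
  (F : T -> \bar R) : (forall x, D x -> (0 <= F x)%E) -> measurable_fun D F ->
  (\int[@dsum d T R x0 l]_(x in D) F x = \sum_(p <- l) (\1_D p)%:E * F p)%E.
Proof.
move=> F0 mF; rewrite /dsum ge0_integral_measure_sum // (big_nth x0) big_mkord.
by apply: eq_bigr => i _; rewrite integral_dirac // diracE indicE.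
Qed.

Lemma int_dsum_any d (T : measurableType d) (R : realType) (s1 : forall q : T, measurable [set q])
  x0 l (D : set T) (mD : measurable D)
  (F : T -> \bar R) : (forall x, D x -> (0 <= F x)%E) ->
  (\int[@dsum d T R x0 l]_(x in D) F x = \sum_(p <- l) (\1_D p)%:E * F p)%E.
Proof.
move=> F0.
pose P := [set x | x \in l].
have mP : measurable P by apply: (@fin_meas _ _ s1 l).
have mu0 : @dsum d T R x0 l (~` P) = 0%E.
  by rewrite dsumE big_seq big1 // => p pl; rewrite indicE memNset //.
pose G := fun x => if x \in l then F x else 0%E.
have G0 : forall x, D x -> (0 <= G x)%E by move=> x Dx; rewrite /G; case: ifP => // _; exact: F0.
have mG : measurable_fun D G.
  move=> _ B mB; apply: measurableI => //.
  rewrite (_ : G @^-1` B = (P `&` G @^-1` B) `|` (~` P `&` G @^-1` B)); last first.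
    by rewrite -setIUl setUCr setTI.
  apply: measurableU; first by apply: (@fin_meas _ _ s1 l) => x [].
  have [B0|B0] := pselect (B 0%E).
    suff -> : ~` P `&` G @^-1` B = ~` P by exact: measurableC.
    apply/seteqP; split => [x []//|x Px]; split => //.
    by rewrite /G /preimage /=; move/negP: Px => /negbTE ->.
  suff -> : ~` P `&` G @^-1` B = set0 by [].
  apply/seteqP; split => // x [Px]; rewrite /G /preimage /=.
  by move/negP: Px => /negbTE ->.
have -> : (\int[@dsum d T R x0 l]_(x in D) F x = \int[@dsum d T R x0 l]_(x in D) G x)%E.
  apply/eqP; rewrite eq_le; apply/andP; split; apply: (nnint_le mP mu0) => //.
    by move=> x Px Dx; rewrite /G; move: Px; rewrite /P /= => ->.
  by move=> x Px Dx; rewrite /G; move: Px; rewrite /P /= => ->.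
rewrite int_dsum_ge0 // big_seq [RHS]big_seq; apply: eq_bigr => p pl.
by rewrite /G pl.
Qed.

Lemma int_dsum_real d (T : measurableType d) (R : realType) (s1 : forall q : T, measurable [set q])
  x0 l (D : set T) (mD : measurable D) (f : T -> R) :
  (\int[@dsum d T R x0 l]_(x in D) (f x)%:E = (\sum_(p <- l) \1_D p * f p)%:E)%E.
Proof.
rewrite integralE !int_dsum_any //; try by move=> x _; [exact: funeneg_ge0|exact: funepos_ge0].
under eq_bigr do rewrite funeposE -EFin_max -EFinM.
under [X in (_ - X)%E]eq_bigr do rewrite funenegE -EFinN -EFin_max -EFinM.
rewrite !sumEFin -EFinB -sumrB; congr (_%:E); apply: eq_bigr => p _.
rewrite -mulrBr; congr (_ * _).
have [h|h] := leP 0 (f p).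
  by rewrite max_r ?subr0 // oppr_le0.
by rewrite max_l ?sub0r ?opprK // oppr_ge0 ltW.
Qed.

Definition um (R : realType) (l : seq R) : set R -> \bar R :=
  mscale ((size l)%:R^-1)%:nng (@dsum _ R R 0 l).
HB.instance Definition _ (R : realType) l := Measure.on (@um R l).

Lemma sum1_sizeR (R : realType) (T : Type) (l : seq T) : \sum_(i <- l) (1:R) = (size l)%:R.
Proof. by elim: l => [|a l IH]; rewrite ?big_nil ?big_cons ?IH //= -add1n natrD. Qed.

Lemma um_real (R : realType) (l : seq R) (f : R -> R) : measurable_fun setT f ->
  (\int[um l]_y (f y)%:E = ((size l)%:R^-1 * \sum_(p <- l) f p)%:E)%E.
Proof.
move=> mf.
have mfE : measurable_fun setT (fun y => (f y)%:E) by exact/measurable_EFinP.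
rewrite integralE /um !ge0_integral_mscale //; try by move=> x _; [exact: funeneg_ge0|exact: funepos_ge0].
2,3: by [apply: measurable_funeneg| apply: measurable_funepos].
rewrite !int_dsum_any //; try by [move=> x _; exact: funeneg_ge0|move=> x _; exact: funepos_ge0|exact: measurable_set1].
under eq_bigr do rewrite funeposE -EFin_max -EFinM.
under [X in (_ - _ * X)%E]eq_bigr do rewrite funenegE -EFinN -EFin_max -EFinM.
rewrite !sumEFin -!EFinM -EFinB -mulrBr -sumrB /=; congr (_%:E); congr (_ * _); apply: eq_bigr => p _.
rewrite indicE in_setT mul1r mul1r.
have [h|h] := leP 0 (f p).
  by rewrite max_r ?subr0 // oppr_le0.
by rewrite max_l ?sub0r ?opprK // oppr_ge0 ltW.
Qed.

Definition kk (R : realType) (x1 : R) (a1 : R) (l1 : seq R) (a2 : R) (l2 : seq R) (x : R)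
  : {measure set R -> \bar R} :=
  if x == x1 then (um (a1 :: l1) : {measure set R -> \bar R}) else (um (a2 :: l2) : {measure set R -> \bar R}).

Lemma kk_meas (R : realType) x1 a1 l1 a2 l2 U : measurable U ->
  measurable_fun [set: R] (fun x => @kk R x1 a1 l1 a2 l2 x U).
Proof.
move=> mU.
have -> : (fun x => kk x1 a1 l1 a2 l2 x U) =
   (fun x => if x == x1 then um (a1 :: l1) U else um (a2 :: l2) U).
  by apply/funext => x; rewrite /kk; case: ifP.
apply: measurable_fun_ifT => //.
exact: measurable_fun_eqr.
Qed.

HB.instance Definition _ (R : realType) x1 a1 l1 a2 l2 :=
  isKernel.Build _ _ _ _ R (@kk R x1 a1 l1 a2 l2) (@kk_meas R x1 a1 l1 a2 l2).

Lemma um_setT (R : realType) (a : R) l : um (a :: l) [set: R] = 1%E.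
Proof.
rewrite /um /mscale /= dsumE -EFinM; congr (_%:E).
rewrite (eq_bigr (fun=> 1)) ?sum1_sizeR ?mulVf ?pnatr_eq0 //.
by move=> i _; rewrite indicE in_setT.
Qed.

Lemma kk_prob (R : realType) x1 a1 l1 a2 l2 x : @kk R x1 a1 l1 a2 l2 x [set: R] = 1%E.
Proof. by rewrite /kk; case: ifP => _; exact: um_setT. Qed.

HB.instance Definition _ (R : realType) x1 a1 l1 a2 l2 :=
  Kernel_isProbability.Build _ _ _ _ R (@kk R x1 a1 l1 a2 l2) (@kk_prob R x1 a1 l1 a2 l2).


Lemma dsum_fin d (T : measurableType d) (R : realType) x0 l : fin_num_fun (@dsum d T R x0 l).
Proof. by move=> A mA; rewrite dsumE. Qed.

HB.instance Definition _ d (T : measurableType d) (R : realType) x0 l :=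
  @Measure_isFinite.Build _ _ _ (@dsum d T R x0 l) (@dsum_fin d T R x0 l).

Lemma indicX (R : realType) (A B : set R) (u v : R) :
  \1_(A `*` B) (u, v) = \1_A u * \1_B v :> R.
Proof. by rewrite !indicE in_setX /=; case: (u \in A); case: (v \in B); rewrite /= ?mulr1 ?mulr0 ?mul0r. Qed.

Lemma dsumEf (R : realType) x0 (l : seq (R * R)%type) (A : set (R * R)%type) :
  (@dsum _ (R * R)%type R x0 l : {finite_measure set (R * R)%type -> \bar R}) A = (\sum_(p <- l) \1_A p)%:E.
Proof. exact: dsumE. Qed.

Lemma umE (R : realType) (l : seq R) (A : set R) :
  um l A = ((size l)%:R^-1 * \sum_(p <- l) \1_A p)%:E.
Proof. by rewrite /um /mscale /= dsumE -EFinM. Qed.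

Lemma umEm (R : realType) (l : seq R) (A : set R) :
  (um l : {measure set R -> \bar R}) A = ((size l)%:R^-1 * \sum_(p <- l) \1_A p)%:E.
Proof. exact: umE. Qed.

Lemma um_id (R : realType) (l : seq R) :
  (\int[(um l : {measure set R -> \bar R})]_y (y%:E) = ((size l)%:R^-1 * \sum_(p <- l) p)%:E)%E.
Proof. exact: (@um_real R l id). Qed.

Lemma kk_int (R : realType) x1 a1 l1 a2 l2 (x : R) :
  (\int[@kk R x1 a1 l1 a2 l2 x]_y (y%:E) =
   if x == x1 then ((size (a1 :: l1))%:R^-1 * \sum_(p <- a1 :: l1) p)%:E
   else ((size (a2 :: l2))%:R^-1 * \sum_(p <- a2 :: l2) p)%:E)%E.
Proof. by rewrite /kk; case: (x == x1); exact: um_id. Qed.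


Lemma mid_in (R : realType) (J : set R) y1 y3 : is_interval J -> J y1 -> J y3 -> J ((y1 + y3) / 2).
Proof.
move=> iJ J1 J3; have [h|h] := leP y1 y3.
  by apply: (iJ y1 y3) => //; apply/andP; split; lra.
by apply: (iJ y3 y1) => //; apply/andP; split; lra.
Qed.

Lemma disc_id (R : realType) (I' J' : set R) (F : R * R -> R) :
  is_interval I' -> is_interval J' -> competitorblind I' J' F ->
  forall x x' y1 y3, I' x -> I' x' -> x != x' -> J' y1 -> J' y3 ->
  F (x,y1) + F (x,y3) + F (x',(y1 + y3) / 2) + F (x',(y1 + y3) / 2) =
  F (x,(y1 + y3) / 2) + F (x,(y1 + y3) / 2) + F (x',y1) + F (x',y3).
Proof.
move=> iI iJ cb x x' y1 y3 Ix Ix' xx' Jy1 Jy3.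
set y2 := (y1 + y3) / 2.
have Jy2 : J' y2 by exact: mid_in.
pose la := [:: (x,y1); (x,y3); (x',y2); (x',y2)].
pose lb := [:: (x,y2); (x,y2); (x',y1); (x',y3)].
pose a := @dsum _ (R * R)%type R (0,0) la.
pose b := @dsum _ (R * R)%type R (0,0) lb.
have mD : measurable (I' `*` J') by apply: measurableX; exact: is_interval_measurable.
have i1 : forall u v, I' u -> J' v -> \1_(I' `*` J') (u,v) = 1 :> R.
  by move=> u v Iu Jv; rewrite indicE mem_set.
have i0 : forall u v, I' u -> J' v -> \1_(~` (I' `*` J')) (u,v) = 0 :> R.
  by move=> u v Iu Jv; rewrite indicE memNset //= => /(_ (conj Iu Jv)).
have ca : concentrated_on a (I' `*` J').
  by rewrite /concentrated_on /a dsumEf !big_cons big_nil !i0 ?addr0.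
have cb2 : concentrated_on b (I' `*` J').
  by rewrite /concentrated_on /b dsumEf !big_cons big_nil !i0 ?addr0.
have x'x : (x' == x) = false by apply/negbTE; rewrite eq_sym.
have comp : competitors a b.
  split; [|split].
  - move=> X mX; rewrite /a /b !dsumEf !big_cons big_nil !indicX !indicE !in_setT.
    by congr EFin; ring.
  - move=> Y mY; rewrite /a /b !dsumEf !big_cons big_nil !indicX !indicE !in_setT.
    by congr EFin; ring.
  exists (kk x y1 [:: y3] y2 [::]), (kk x y2 [::] y1 [:: y3]); split.
  - move=> X Y mX mY; rewrite int_dsum_ge0 //.
    + rewrite /a dsumEf !big_cons !big_nil /= /kk eqxx x'x !umEm !indicX !indicE !in_setT /=.
      rewrite -!EFinM -!EFinD; congr EFin; rewrite !big_cons !big_nil !indicE invr1; by field.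
    + exact: (measurableX mX measurableT).
    + apply: (measurable_funS measurableT) => //.
      exact: measurableT_comp (measurable_kernel _ _ mY) measurable_fst.
  - move=> X Y mX mY; rewrite int_dsum_ge0 //.
    + rewrite /b dsumEf !big_cons !big_nil /= /kk eqxx x'x !umEm !indicX !indicE !in_setT /=.
      rewrite -!EFinM -!EFinD; congr EFin; rewrite !big_cons !big_nil !indicE invr1; by field.
    + exact: (measurableX mX measurableT).
    + apply: (measurable_funS measurableT) => //.
      exact: measurableT_comp (measurable_kernel _ _ mY) measurable_fst.
  - apply: aeW => p; rewrite !kk_int; case: ifP => _ /=; congr EFin; rewrite !big_cons !big_nil invr1 /y2; by field.
have := cb a b comp ca cb2.
rewrite /a /b !int_dsum_real //; try exact: set1_RR.
move=> [] /=; rewrite !big_cons !big_nil !i1 // => H; lra.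
Qed.


Lemma tent_cont (R : realType) (K z : R) :
  continuous ((cst 0 : R -> R^o) \max (fun v : R => 1 - K * `|v - z|)).
Proof.
move=> v; apply: continuous_max; first exact: cst_continuous.
apply: continuousB; first exact: cst_continuous.
apply: continuousM; first exact: cst_continuous.
apply: (@continuous_comp _ _ _ (fun v => v - z) (fun u : R => `|u|)).
  by apply: continuousB; [by move=> ?; exact: cvg_id|exact: cst_continuous].
exact: norm_continuous.
Qed.

Lemma tent (R : realType) (z : R) (vs : seq R) : exists g : R -> R,
  [/\ continuous g, (exists M, forall u, `|g u| <= M) &
      (forall v, v \in vs -> g v = (v == z)%:R)].
Proof.
pose K := 1 + \sum_(v <- vs) (if v == z then 0 else `|v - z|^-1).
have K1 : 1 <= K.
  rewrite /K lerDl; apply: sumr_ge0 => v _; case: ifP => // _; rewrite invr_ge0 //.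
exists ((cst 0 : R -> R^o) \max (fun v : R => 1 - K * `|v - z|)); split.
- exact: tent_cont.
- exists 1 => u /=; rewrite ger0_norm ?le_max ?lexx //.
  rewrite ge_max ler01 /= lerBlDr lerDl; apply: mulr_ge0 => //; lra.
- move=> v vs_v /=; have [->|vz] := eqVneq v z.
    by rewrite subrr normr0 mulr0 subr0 max_r ?ler01.
  rewrite max_l //; rewrite subr_le0.
  have Kge : 1 + `|v - z|^-1 <= K.
    rewrite /K lerD2l (big_rem v) //= (negbTE vz) lerDl.
    by apply: sumr_ge0 => w _; case: ifP => // _; rewrite invr_ge0.
  have pos : 0 < `|v - z| by rewrite normr_gt0 subr_eq0.
  apply: (le_trans _ (ler_wpM2r (ltW pos) Kge)).
  by rewrite mulrDl mul1r mulVf ?gt_eqF // lerDr ltW.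
Qed.


Definition mid (R : realType) (a b : R) := (a + b) / 2.
Definition ind (R : realType) (a b : R) : R := (a == b)%:R.

Definition Aw (R : realType) (S H : R -> R -> R) (y1 y3 x z : R) :=
  H x y1 * ind (S x y1) z + H x y3 * ind (S x y3) z
  - 2 * H x (mid y1 y3) * ind (S x (mid y1 y3)) z.
Definition Cw (R : realType) (S T H : R -> R -> R) (y1 y3 x z : R) :=
  H x y1 * T x y1 * ind (S x y1) z + H x y3 * T x y3 * ind (S x y3) z
  - 2 * H x (mid y1 y3) * T x (mid y1 y3) * ind (S x (mid y1 y3)) z.

Lemma gamma3 (R : realType) (s1 s2 s3 t1 t2 t3 w1 w2 w3 : R) :
  w1 != 0 -> w2 != 0 -> w3 != 0 -> (s1 = s2 -> t1 <> t2) -> (s1 = s3 -> t1 <> t3) ->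
  ~(s1 = s2 /\ s1 = s3) ->
  w1 * ind s1 s1 + w2 * ind s2 s1 + w3 * ind s3 s1 != 0 \/
  w1 * t1 * ind s1 s1 + w2 * t2 * ind s2 s1 + w3 * t3 * ind s3 s1 != 0.
Proof.
move=> w10 w20 w30 i12 i13 np; rewrite /ind eqxx.
case: (eqVneq s2 s1) => [e21|n21]; case: (eqVneq s3 s1) => [e31|n31].
- by exfalso; apply: np.
- rewrite !mulr1 !mulr0 !addr0; have [A0|A0] := eqVneq (w1 + w2) 0; [right|by left].
  have -> : w2 = - w1 by lra.
  rewrite mulNr -mulrBr mulf_neq0 // subr_eq0; apply/eqP => e.
  by apply: (i12 (esym e21)).
- rewrite !mulr1 !mulr0 !addr0; have [A0|A0] := eqVneq (w1 + w3) 0; [right|by left].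
  have -> : w3 = - w1 by lra.
  rewrite mulNr -mulrBr mulf_neq0 // subr_eq0; apply/eqP => e.
  by apply: (i13 (esym e31)).
- by left; rewrite !mulr1 !mulr0 !addr0.
Qed.

Lemma mid_neq (R : realType) (y1 y3 : R) : y1 != y3 -> (mid y1 y3 != y1) /\ (mid y1 y3 != y3).
Proof.
move=> n; rewrite /mid; split; apply/eqP => e; move/eqP: n; apply; lra.
Qed.

Lemma row_gamma (R : realType) (I' J' : set R) (S T H : R -> R -> R)
  (hpos : forall x y, I' x -> J' y -> 0 < H x y)
  (injr : forall x x' y y', I' x -> I' x' -> J' y -> J' y' ->
     S x y = S x' y' -> T x y = T x' y' -> x = x' /\ y = y')
  x y1 y3 : I' x -> J' y1 -> J' y3 -> J' (mid y1 y3) -> y1 != y3 ->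
  ~ (S x y1 = S x (mid y1 y3) /\ S x y1 = S x y3) ->
  forall y, (y = y1 \/ y = y3 \/ y = mid y1 y3) ->
  Aw S H y1 y3 x (S x y) != 0 \/ Cw S T H y1 y3 x (S x y) != 0.
Proof.
move=> Ix J1 J3 J2 n13 np y hy.
have [n21 n23] := mid_neq n13.
set y2 := mid y1 y3 in J2 n21 n23 np hy *.
have ir : forall ya yb, J' ya -> J' yb -> ya != yb -> S x ya = S x yb -> T x ya <> T x yb.
  move=> ya yb Ja Jb nab es et; have [_ e] := injr _ _ _ _ Ix Ix Ja Jb es et.
  by rewrite e eqxx in nab.
have h1 := hpos _ _ Ix J1; have h2 := hpos _ _ Ix J2; have h3 := hpos _ _ Ix J3.
have w1 : H x y1 != 0 by apply/eqP => e; lra.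
have w3 : H x y3 != 0 by apply/eqP => e; lra.
have w2 : -2 * H x y2 != 0 by apply/eqP => e; lra.
have n12 : y1 != y2 by rewrite eq_sym.
have n32 : y3 != y2 by rewrite eq_sym.
have n31 : y3 != y1 by rewrite eq_sym.
case: hy => [->|[->|->]].
- have := gamma3 w1 w2 w3 (ir _ _ J1 J2 n12) (ir _ _ J1 J3 n13) np.
  by rewrite /Aw /Cw -/y2 => -[h|h]; [left|right]; apply: contra_neq h => h0; lra.
- have np' : ~ (S x y3 = S x y1 /\ S x y3 = S x y2).
    by move=> [e1 e2]; apply: np; split; congruence.
  have := gamma3 w3 w1 w2 (ir _ _ J3 J1 n31) (ir _ _ J3 J2 n32) np'.
  by rewrite /Aw /Cw -/y2 => -[h|h]; [left|right]; apply: contra_neq h => h0; lra.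
- have np' : ~ (S x y2 = S x y1 /\ S x y2 = S x y3).
    by move=> [e1 e2]; apply: np; split; congruence.
  have := gamma3 w2 w1 w3 (ir _ _ J2 J1 n21) (ir _ _ J2 J3 n23) np'.
  by rewrite /Aw /Cw -/y2 => -[h|h]; [left|right]; apply: contra_neq h => h0; lra.
Qed.

Lemma count_contra (R : realType) (I' : set R) (a b : R) (P : R -> 'I_3 -> 'I_3 -> 'I_3 -> Prop)
  (Q : R -> Prop) : is_interval I' -> I' a -> I' b -> a < b ->
  (forall x, I' x -> Q x \/ exists i j k, P x i j k) ->
  (forall x x', I' x -> I' x' -> Q x -> Q x' -> x = x') ->
  (forall x x' i j k, I' x -> I' x' -> P x i j k -> P x' i j k -> x = x') -> False.
Proof.
move=> iI Ia Ib ab cov uQ uP.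
pose pts (i : 'I_30) := a + i%:R * (b - a) / 30%:R.
have Ipts : forall i, I' (pts i).
  move=> i; apply: (iI a b) => //; rewrite /pts; apply/andP; split.
    rewrite lerDl; apply: divr_ge0 => //; apply: mulr_ge0 => //; lra.
  have : (i%:R : R) <= 29%:R by rewrite ler_nat -ltnS ltn_ord.
  move=> hi; rewrite -lerBrDl ler_pdivrMr ?ltr0n // mulrC.
  apply: ler_wpM2l; lra.
have inj_pts : injective pts.
  move=> i j; rewrite /pts => /addrI; rewrite -!mulrA.
  have nz : (b - a) / 30%:R != 0 by apply/eqP => e; lra.
  move/(mulIf nz)/eqP; rewrite eqr_nat => /eqP; exact: val_inj.
pose f (i : 'I_30) := [pick c : 'I_3 * 'I_3 * 'I_3 | `[< P (pts i) c.1.1 c.1.2 c.2 >] ].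
have finj : injective f.
  move=> i j; rewrite /f; case: pickP => [c /asboolP Pc|nP]; case: pickP => [c' /asboolP Pc'|nP'] //.
  - by case=> ec; subst c'; apply: inj_pts; exact: (uP _ _ _ _ _ (Ipts i) (Ipts j) Pc Pc').
  - move=> _; apply: inj_pts; apply: uQ; [exact: Ipts|exact: Ipts| |].
    + case: (cov _ (Ipts i)) => // -[i1 [j1 [k1 Pk]]].
      by have := nP (i1, j1, k1); rewrite /= asboolT.
    + case: (cov _ (Ipts j)) => // -[i1 [j1 [k1 Pk]]].
      by have := nP' (i1, j1, k1); rewrite /= asboolT.
have := leq_card f finj; by rewrite card_option !card_prod !card_ord.
Qed.

Lemma Aw_supp (R : realType) (S H : R -> R -> R) y1 y3 x z :
  Aw S H y1 y3 x z != 0 -> z = S x y1 \/ z = S x y3 \/ z = S x (mid y1 y3).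
Proof.
move=> h; apply: contrapT => hn; move/eqP: h; apply; rewrite /Aw /ind.
have -> : (S x y1 == z) = false by apply/eqP => e; apply: hn; left.
have -> : (S x y3 == z) = false by apply/eqP => e; apply: hn; right; left.
have -> : (S x (mid y1 y3) == z) = false by apply/eqP => e; apply: hn; right; right.
by rewrite /= !mulr0 subr0 addr0.
Qed.

Lemma Cw_supp (R : realType) (S T H : R -> R -> R) y1 y3 x z :
  Cw S T H y1 y3 x z != 0 -> z = S x y1 \/ z = S x y3 \/ z = S x (mid y1 y3).
Proof.
move=> h; apply: contrapT => hn; move/eqP: h; apply; rewrite /Cw /ind.
have -> : (S x y1 == z) = false by apply/eqP => e; apply: hn; left.
have -> : (S x y3 == z) = false by apply/eqP => e; apply: hn; right; left.
have -> : (S x (mid y1 y3) == z) = false by apply/eqP => e; apply: hn; right; right.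
by rewrite /= !mulr0 subr0 addr0.
Qed.

Lemma triple_pure (R : realType) (I' J' : set R) (S T H : R -> R -> R)
  (hpos : forall x y, I' x -> J' y -> 0 < H x y)
  (injr : forall x x' y y', I' x -> I' x' -> J' y -> J' y' ->
     S x y = S x' y' -> T x y = T x' y' -> x = x' /\ y = y')
  (iI : is_interval I') (a b : R) (Ia : I' a) (Ib : I' b) (ab : a < b)
  y1 y3 (J1 : J' y1) (J3 : J' y3) (J2 : J' (mid y1 y3)) (n13 : y1 != y3)
  (Heq : forall x x' z, I' x -> I' x' ->
     [/\ Aw S H y1 y3 x z = Aw S H y1 y3 x' z, Aw T H y1 y3 x z = Aw T H y1 y3 x' z &
         Cw S T H y1 y3 x z = Cw S T H y1 y3 x' z]) :
  forall x, I' x -> S x y1 = S x y3.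
Proof.
have [n21 n23] := mid_neq n13.
set y2 := mid y1 y3 in J2 n21 n23 Heq *.
have n12 : y1 != y2 by rewrite eq_sym.
have ir : forall x ya yb, I' x -> J' ya -> J' yb -> ya != yb -> S x ya = S x yb -> T x ya <> T x yb.
  move=> x ya yb Ix Ja Jb nab es et; have [_ e] := injr _ _ _ _ Ix Ix Ja Jb es et.
  by rewrite e eqxx in nab.
have pureP : forall x0, I' x0 -> (S x0 y1 = S x0 y2 /\ S x0 y1 = S x0 y3) ->
    forall x, I' x -> S x y1 = S x y2 /\ S x y1 = S x y3.
  move=> x0 I0 [p2 p3] x Ix; apply: contrapT => np.
  have key : forall y, (y = y1 \/ y = y3 \/ y = y2) -> S x y = S x0 y1.
    move=> y hy; have [eA _ eC] := Heq x x0 (S x y) Ix I0.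
    case: (row_gamma hpos injr Ix J1 J3 J2 n13 np hy) => h.
      by rewrite eA in h; case: (Aw_supp h) => [->|[->|->]].
    by rewrite eC in h; case: (Cw_supp h) => [->|[->|->]].
  apply: np; rewrite (key y1) ?(key y2) ?(key y3); auto.
suff [x0 [I0 p0]] : exists x0, I' x0 /\ (S x0 y1 = S x0 y2 /\ S x0 y1 = S x0 y3).
  by move=> x Ix; have [] := pureP x0 I0 p0 x Ix.
apply: contrapT => nex.
have nop : forall x, I' x -> ~ (S x y1 = S x y2 /\ S x y1 = S x y3).
  by move=> x Ix px; apply: nex; exists x.
pose yy (i : 'I_3) := if val i == 0%N then y1 else if val i == 1%N then y3 else y2.
have idx : forall y, (y = y1 \/ y = y3 \/ y = y2) -> exists i : 'I_3, yy i = y.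
  move=> y [->|[->|->]].
  - by exists (@Ordinal 3 0 isT).
  - by exists (@Ordinal 3 1 isT).
  - by exists (@Ordinal 3 2 isT).
have idx2 : forall (F : R -> R) v, (v = F y1 \/ v = F y3 \/ v = F y2) -> exists i : 'I_3, v = F (yy i).
  move=> F v [->|[->|->]].
  - by exists (@Ordinal 3 0 isT).
  - by exists (@Ordinal 3 1 isT).
  - by exists (@Ordinal 3 2 isT).
have Jyy : forall i, J' (yy i) by move=> i; rewrite /yy; case: ifP => _ //; case: ifP.
apply: (@count_contra R I' a b
  (fun x i j k => S x (yy i) = S a (yy j) /\ T x (yy i) = T a (yy k))
  (fun x => T x y1 = T x y2 /\ T x y1 = T x y3)) => //.
- move=> x Ix; have [tp|ntp] := pselect (T x y1 = T x y2 /\ T x y1 = T x y3); [by left|right].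
  have h1 := hpos _ _ Ix J1; have h2 := hpos _ _ Ix J2; have h3 := hpos _ _ Ix J3.
  have [y [hy Ay]] : exists y, (y = y1 \/ y = y3 \/ y = y2) /\ Aw T H y1 y3 x (T x y) != 0.
    rewrite /Aw /ind -/y2.
    case: (eqVneq (T x y1) (T x y2)) => [e12|d12].
      have d13 : T x y3 != T x y1 by apply/eqP => e; apply: ntp; split.
      exists y3; split; first by right; left.
      have f1 : (T x y1 == T x y3) = false by rewrite eq_sym (negbTE d13).
      have f2 : (T x y2 == T x y3) = false by rewrite -e12 eq_sym (negbTE d13).
      rewrite eqxx f1 f2 /=; apply/eqP => e; lra.
    case: (eqVneq (T x y1) (T x y3)) => [e13|d13].
      exists y2; split; first by right; right.
      have f1 : (T x y1 == T x y2) = false by rewrite (negbTE d12).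
      have f3 : (T x y3 == T x y2) = false by rewrite -e13 (negbTE d12).
      rewrite eqxx f1 f3 /=; apply/eqP => e; lra.
    exists y1; split; first by left.
    have f3 : (T x y3 == T x y1) = false by rewrite eq_sym (negbTE d13).
    have f2 : (T x y2 == T x y1) = false by rewrite eq_sym (negbTE d12).
    rewrite eqxx f2 f3 /=; apply/eqP => e; lra.
  have sS : exists j, S x y = S a (yy j).
    have [eA _ eC] := Heq x a (S x y) Ix Ia.
    case: (row_gamma hpos injr Ix J1 J3 J2 n13 (nop x Ix) hy) => h.
      by rewrite eA in h; apply: idx2; apply: Aw_supp h.
    by rewrite eC in h; apply: idx2; apply: Cw_supp h.
  have sT : exists k, T x y = T a (yy k).
    have [_ eB _] := Heq x a (T x y) Ix Ia.
    by rewrite eB in Ay; apply: idx2; apply: Aw_supp Ay.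
  have [i yi] := idx y hy; have [j ej] := sS; have [k ek] := sT.
  by exists i, j, k; rewrite yi.
- have vals : forall x, I' x -> T x y1 = T x y2 -> T x y1 = T x y3 ->
      Aw S H y1 y3 x (S x y2) = -2 * H x y2 /\ Cw S T H y1 y3 x (S x y2) = -2 * H x y2 * T x y2.
    move=> x Ix q2 q3.
    have f1 : (S x y1 == S x y2) = false.
      by apply/eqP => e; apply: (ir x y1 y2 Ix J1 J2 n12 e).
    have f3 : (S x y3 == S x y2) = false.
      apply/eqP => e; apply: (ir x y3 y2 Ix J3 J2 _ e); last by rewrite -q2 -q3.
      by rewrite eq_sym.
    by rewrite /Aw /Cw /ind -/y2 f1 f3 eqxx /=; split; ring.
  move=> x x' Ix Ix' [q2 q3] [q2' q3'].
  have [Ax Cx] := vals x Ix q2 q3; have [Ax' Cx'] := vals x' Ix' q2' q3'.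
  have [eA _ eC] := Heq x x' (S x y2) Ix Ix'.
  have hx := hpos _ _ Ix J2; have hx' := hpos _ _ Ix' J2.
  have es : S x' y2 = S x y2.
    case: (eqVneq (S x' y2) (S x y2)) => [//|ne].
    have : 0 <= Aw S H y1 y3 x' (S x y2).
      rewrite /Aw /ind -/y2 (negbTE ne) /= mulr0 subr0.
      by apply: addr_ge0; apply: mulr_ge0 => //; apply: ltW; apply: hpos.
    by rewrite -eA Ax => h; exfalso; lra.
  rewrite es in Ax' Cx'; rewrite Ax Ax' in eA; rewrite Cx Cx' in eC.
  have eH : H x y2 = H x' y2 by lra.
  rewrite eH in eC.
  have eT : T x y2 = T x' y2.
    apply: (mulfI (x := -2 * H x' y2)); first by apply/eqP => e; lra.
    exact: eC.
  by have [] := injr _ _ _ _ Ix Ix' J2 J2 (esym es) eT.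
- move=> x x' i j k Ix Ix' [e1 e2] [e1' e2'].
  by have [] := injr _ _ _ _ Ix Ix' (Jyy i) (Jyy i) (etrans e1 (esym e1')) (etrans e2 (esym e2')).
Qed.

Lemma triple_t (R : realType) (I' J' : set R) (S T H : R -> R -> R)
  (hpos : forall x y, I' x -> J' y -> 0 < H x y)
  (injr : forall x x' y y', I' x -> I' x' -> J' y -> J' y' ->
     S x y = S x' y' -> T x y = T x' y' -> x = x' /\ y = y')
  y1 y3 (J1 : J' y1) (J3 : J' y3) (J2 : J' (mid y1 y3)) (n13 : y1 != y3)
  (HeqB : forall x x' z, I' x -> I' x' -> Aw T H y1 y3 x z = Aw T H y1 y3 x' z)
  (allS : forall x, I' x -> S x y1 = S x (mid y1 y3) /\ S x y1 = S x y3) :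
  forall x x', I' x -> I' x' ->
    T x (mid y1 y3) = T x' (mid y1 y3) /\ (T x y1 = T x' y1 \/ T x y1 = T x' y3).
Proof.
have [n21 n23] := mid_neq n13.
set y2 := mid y1 y3 in J2 n21 n23 HeqB allS *.
have n12 : y1 != y2 by rewrite eq_sym.
have ir : forall x ya yb, I' x -> J' ya -> J' yb -> ya != yb -> S x ya = S x yb -> T x ya != T x yb.
  move=> x ya yb Ix Ja Jb nab es; apply/eqP => et; have [_ e] := injr _ _ _ _ Ix Ix Ja Jb es et.
  by rewrite e eqxx in nab.
have dT : forall x, I' x -> [/\ T x y1 != T x y2, T x y3 != T x y2 & T x y1 != T x y3].
  move=> x Ix; have [e2 e3] := allS x Ix; split.
  - by apply: ir.
  - by apply: ir => //; [rewrite eq_sym|rewrite -e2 -e3].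
  - by apply: ir.
have mid_eq : forall x x', I' x -> I' x' -> T x y2 = T x' y2.
  move=> x x' Ix Ix'; have [d12 d32 d13] := dT x Ix.
  have Ax : Aw T H y1 y3 x (T x y2) = -2 * H x y2.
    by rewrite /Aw /ind -/y2 (negbTE d12) (negbTE d32) eqxx /=; ring.
  case: (eqVneq (T x' y2) (T x y2)) => [//|ne].
  have : 0 <= Aw T H y1 y3 x' (T x y2).
    rewrite /Aw /ind -/y2 (negbTE ne) /= mulr0 subr0.
    by apply: addr_ge0; apply: mulr_ge0 => //; apply: ltW; apply: hpos.
  have := hpos _ _ Ix J2.
  by rewrite -(HeqB x x' _ Ix Ix') Ax => h1 h2; exfalso; move: h1 h2; lra.
move=> x x' Ix Ix'; split; first exact: mid_eq.
have [d12 d32 d13] := dT x Ix.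
have Ax : Aw T H y1 y3 x (T x y1) = H x y1.
  have f3 : (T x y3 == T x y1) = false by rewrite eq_sym (negbTE d13).
  have f2 : (T x y2 == T x y1) = false by rewrite eq_sym (negbTE d12).
  by rewrite /Aw /ind -/y2 f2 f3 eqxx /=; ring.
have : Aw T H y1 y3 x' (T x y1) != 0.
  rewrite -(HeqB x x' _ Ix Ix') Ax; have := hpos _ _ Ix J1.
  by move=> h; apply/eqP => e; move: h; rewrite e; lra.
move/Aw_supp => [->|[->|e]]; [by left|by right|].
by exfalso; move/eqP: d12; apply; rewrite e -/y2 (mid_eq x x').
Qed.


Lemma indS (R : realType) (a z c : R) : (a == z)%:R * (c - a) = (a == z)%:R * (c - z).
Proof. by case: eqP => [->|_]; rewrite ?mul0r. Qed.

Lemma HABC (R : realType) (I' J' : set R) (s t h : R -> R -> R) :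
  is_interval I' -> is_interval J' ->
  (forall g : R -> R, continuous g -> (exists M, forall z, `|g z| <= M) ->
     [/\ competitorblind I' J' (fun p => g (s p.1 p.2) * h p.1 p.2),
         competitorblind I' J' (fun p => g (t p.1 p.2) * h p.1 p.2) &
         competitorblind I' J'
           (fun p => g (s p.1 p.2) * (t p.1 p.2 - s p.1 p.2) * h p.1 p.2)]) ->
  forall y1 y3, J' y1 -> J' y3 -> forall x x' z, I' x -> I' x' ->
  [/\ Aw s h y1 y3 x z = Aw s h y1 y3 x' z, Aw t h y1 y3 x z = Aw t h y1 y3 x' z &
      Cw s t h y1 y3 x z = Cw s t h y1 y3 x' z].
Proof.
move=> iI iJ hcb y1 y3 J1 J3 x x' z Ix Ix'.
have [<-|nxx] := eqVneq x x'; first by [].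
have [gs [gc gb gv]] := tent z [:: s x y1; s x y3; s x ((y1+y3)/2);
  s x' y1; s x' y3; s x' ((y1+y3)/2)].
have [c1 _ c3] := hcb gs gc gb.
have [gt [gtc gtb gtv]] := tent z [:: t x y1; t x y3; t x ((y1+y3)/2);
  t x' y1; t x' y3; t x' ((y1+y3)/2)].
have [_ c2 _] := hcb gt gtc gtb.
have EA := disc_id iI iJ c1 Ix Ix' nxx J1 J3.
have EB := disc_id iI iJ c2 Ix Ix' nxx J1 J3.
have EC := disc_id iI iJ c3 Ix Ix' nxx J1 J3.
rewrite /= !gv ?inE ?eqxx ?orbT // in EA.
rewrite /= !gv ?inE ?eqxx ?orbT // in EC.
rewrite /= !gtv ?inE ?eqxx ?orbT // in EB.
rewrite !indS in EC.
have HAz := congr1 (fun u => z * u) EA; rewrite /= in HAz.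
rewrite /Aw /Cw /ind /mid; split; lra.
Qed.


End Helpers.
Import Helpers.

Theorem proposition4p8 (R : realType) (I J I' J' : set R)
  (s t h : R -> R -> R) :
  nd_interval I -> nd_interval J -> nd_interval I' -> nd_interval J' ->
  set_bij (I' `*` J') (I `*` J) (fun p : R * R => (s p.1 p.2, t p.1 p.2)) ->
  (forall x y, I' x -> J' y -> 0 < h x y) ->
  (forall g : R -> R, continuous g -> (exists M, forall z, `|g z| <= M) ->
     [/\ competitorblind I' J' (fun p => g (s p.1 p.2) * h p.1 p.2),
         competitorblind I' J' (fun p => g (t p.1 p.2) * h p.1 p.2) &
         competitorblind I' J'
           (fun p => g (s p.1 p.2) * (t p.1 p.2 - s p.1 p.2) * h p.1 p.2)]) ->
  (forall x y1 y2, I' x -> J' y1 -> J' y2 -> s x y1 = s x y2) /\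
  (forall x1 x2 y, I' x1 -> I' x2 -> J' y -> t x1 y = t x2 y).
Proof.
move=> _ _ [iI' [a [b [Ia [Ib ab]]]]] [iJ' [u [v [Ju [Jv uv]]]]] [_ hinj _] hpos hcb.
have injr : forall x x' y y', I' x -> I' x' -> J' y -> J' y' ->
    s x y = s x' y' -> t x y = t x' y' -> x = x' /\ y = y'.
  move=> x x' y y' Ix Ix' Jy Jy' es et.
  have := hinj (x, y) (x', y') (mem_set (conj Ix Jy)) (mem_set (conj Ix' Jy')).
  by rewrite /= es et => /(_ erefl) [-> ->].
have Heq := HABC iI' iJ' hcb.
have sconst : forall x y y', I' x -> J' y -> J' y' -> s x y = s x y'.
  move=> x y y' Ix Jy Jy'; have [->//|nyy] := eqVneq y y'.
  exact: (triple_pure hpos injr iI' Ia Ib ab Jy Jy' (mid_in iJ' Jy Jy') nyy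
    (fun x x' z Ix Ix' => Heq y y' Jy Jy' x x' z Ix Ix') Ix).
split; first exact: sconst.
move=> x1 x2 y I1 I2 Jy.
have [y' [Jy' nyy']] : exists y', J' y' /\ y != y'.
  have [e|ne] := eqVneq y u; last by exists u.
  by exists v; split => //; rewrite e; apply/eqP => e'; rewrite e' ltxx in uv.
have Jm : J' (mid y y') := mid_in iJ' Jy Jy'.
have [tm _] := triple_t hpos injr Jy Jy' Jm nyy'
  (fun x x' z Ix Ix' => let: And3 _ e _ := Heq y y' Jy Jy' x x' z Ix Ix' in e)
  (fun x Ix => conj (sconst x _ _ Ix Jy Jm) (sconst x _ _ Ix Jy Jy')) I1 I2.
have [nmy _] := mid_neq nyy'.
have nym : y != mid y y' by rewrite eq_sym.
have Jq : J' (mid y (mid y y')) := mid_in iJ' Jy Jm.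
have [_ [//|e]] := triple_t hpos injr Jy Jm Jq nym
  (fun x x' z Ix Ix' => let: And3 _ e _ := Heq y (mid y y') Jy Jm x x' z Ix Ix' in e)
  (fun x Ix => conj (sconst x _ _ Ix Jy Jq) (sconst x _ _ Ix Jy Jm)) I1 I2.
exfalso; rewrite -tm in e.
have [_ eym] := injr _ _ _ _ I1 I1 Jy Jm (sconst x1 _ _ I1 Jy Jm) e.
by move/eqP: nym; apply.
Qed.
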